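(* Let $X$ be a topological space in which every $\Lambda$-set is a $G_\delta$-set, and suppose that for each pair of disjoint $F_\sigma$-sets $F_0,F_1$ in $X$ there exist $G_\delta$-sets $G_0,G_1$ with $F_0\subseteq G_0$, $F_1\subseteq G_1$ and $G_0\cap G_1=\varnothing$. Let $g,f:X\to\mathbb{R}$ be functions such that $f$ is lower semi-Baire-one, $g$ is upper semi-Baire-one, and $f\le g$. Then there exists a Baire-one function $h:X\to\mathbb{R}$ such that $f\le h\le g$.
   Context: A $\Lambda$-set in $X$ is an intersection of open sets. A function $f:X\to\mathbb{R}$ is upper semi-Baire-one (resp. lower semi-Baire-one) if $f^{-1}(-\infty,t)$ (resp. $f^{-1}(t,+\infty)$) is an $F_\sigma$-set in $X$ for every real $t$. A function $h:X\to\mathbb{R}$ is Baire-one if the preimage of every open subset of $\mathbb{R}$ is an $F_\sigma$-set in $X$. $f\le g$ means $f(x)\le g(x)$ for all $x\in X$. *)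

(* Defs.v *)
From HB Require Import structures.
From mathcomp Require Import all_boot all_order all_algebra.
From mathcomp Require Import all_classical all_reals all_analysis.
From mathcomp Require Import borel_hierarchy.
Set Implicit Arguments. Unset Strict Implicit. Unset Printing Implicit Defensive.
Import Order.TTheory GRing.Theory Num.Theory.
Import numFieldNormedType.Exports.
Local Open Scope classical_set_scope.
Local Open Scope ring_scope.

Definition Lambda_set {T : topologicalType} (A : set T) : Prop :=
  exists F : set (set T), (forall U, F U -> open U) /\ A = \bigcap_(U in F) U.

Definition upper_semi_Baire_one {T : topologicalType} {R : realType}
  (f : T -> R) : Prop :=
  forall t : R, Fsigma (f @^-1` `]-oo, t[).

Definition lower_semi_Baire_one {T : topologicalType} {R : realType}
  (f : T -> R) : Prop :=
  forall t : R, Fsigma (f @^-1` `]t, +oo[).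

Definition Baire_one {T : topologicalType} {R : realType} (h : T -> R) : Prop :=
  forall V : set R, open V -> Fsigma (h @^-1` V).

(* Main.v *)
Require Import Defs.
From HB Require Import structures.
From mathcomp Require Import all_boot all_order all_algebra.
From mathcomp Require Import all_classical all_reals all_analysis.
From mathcomp Require Import borel_hierarchy.
From mathcomp Require Import lra.
Import Order.TTheory GRing.Theory Num.Theory.
Import numFieldNormedType.Exports.
Local Open Scope classical_set_scope.
Local Open Scope ring_scope.

Section helpers.
Context {X : topologicalType}.
Implicit Types A B : set X.

Lemma Fsigma_setC A : Fsigma A -> Gdelta (~` A).
Proof.
move=> [F cF ->]; exists (fun i => ~` F i); first by move=> i; exact: closed_openC.
by rewrite setC_bigcup.
Qed.

Lemma Gdelta_setC A : Gdelta A -> Fsigma (~` A).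
Proof.
move=> [F cF ->]; exists (fun i => ~` F i); first by move=> i; exact: open_closedC.
by rewrite setC_bigcap.
Qed.

Variable HL : forall A : set X, Lambda_set A -> Gdelta A.

Lemma Gdelta_bigcap (I : Type) (P : set I) (B : I -> set X) :
  (forall i, P i -> Gdelta (B i)) -> Gdelta (\bigcap_(i in P) B i).
Proof.
move=> GB; apply: HL.
exists [set U | open U /\ exists2 i, P i & B i `<=` U]; split; first by move=> U [].
apply/seteqP; split => x /=.
  by move=> Bx U [oU [i Pi BU]]; apply: BU; apply: Bx.
move=> Ux i Pi; have [F oF BF] := GB i Pi.
rewrite BF => n _; apply: Ux; split => //; exists i => //.
by rewrite BF => y; apply.
Qed.

Lemma Fsigma_bigcup (I : Type) (P : set I) (A : I -> set X) :
  (forall i, P i -> Fsigma (A i)) -> Fsigma (\bigcup_(i in P) A i).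
Proof.
move=> FA; rewrite -[X in Fsigma X]setCK; apply: Gdelta_setC.
rewrite setC_bigcup; apply: Gdelta_bigcap => i Pi; apply: Fsigma_setC; exact: FA.
Qed.

Lemma FsigmaI A B : Fsigma A -> Fsigma B -> Fsigma (A `&` B).
Proof.
move=> [F cF ->] [G cG ->].
have -> : \bigcup_i F i `&` \bigcup_i G i =
  \bigcup_(p in [set: nat * nat]) (F p.1 `&` G p.2).
  apply/seteqP; split => x /=.
    by move=> [[i _ Fx] [j _ Gx]]; exists (i, j).
  by move=> [[i j] _ [/= Fx Gx]]; split; [exists i|exists j].
apply: Fsigma_bigcup => p _; apply: closed_Fsigma; exact: closedI.
Qed.

End helpers.

Theorem corollary4 (X : topologicalType) (R : realType)
  (HL : forall A : set X, Lambda_set A -> Gdelta A)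
  (HS : forall F0 F1 : set X, Fsigma F0 -> Fsigma F1 -> F0 `&` F1 = set0 ->
        exists G0 G1 : set X, [/\ Gdelta G0, Gdelta G1, F0 `<=` G0, F1 `<=` G1
                                & G0 `&` G1 = set0])
  (f g : X -> R)
  (hf : lower_semi_Baire_one f) (hg : upper_semi_Baire_one g)
  (hfg : forall x, f x <= g x) :
  exists h : X -> R, Baire_one h /\ (forall x, f x <= h x) /\ (forall x, h x <= g x).
Proof.
pose hull (A : set X) := \bigcap_(G in [set G | Gdelta G /\ A `<=` G]) G.
have hullG A : Gdelta (hull A) by apply: Gdelta_bigcap => // G [].
have hullS A : A `<=` hull A by move=> x Ax G [_]; apply.
have hull_min A G : Gdelta G -> A `<=` G -> hull A `<=` G.
  by move=> GG AG x; apply.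
pose C s := hull [set y | s < f y].
have CF s : Fsigma (C s).
  have Ff : Fsigma [set y | s < f y].
    have := hf s; congr Fsigma; apply/seteqP; split => y /=;
      by rewrite in_itv /= andbT.
  have D0 : [set y | s < f y] `&` ~` C s = set0.
    by apply/seteqP; split => // x [/hullS].
  have [G0 [G1 [G0d G1d sub0 sub1 G01]]] := HS _ _ Ff (Gdelta_setC _ (hullG _)) D0.
  have -> : C s = ~` G1.
    apply/seteqP; split => x.
      move=> Cx G1x; have : (G0 `&` G1) x; last by rewrite G01.
      by split => //; apply: (hull_min _ _ G0d sub0).
    move=> nG1x; apply: contra_notP nG1x => nCx; exact: sub1.
  exact: Gdelta_setC.
have Cmono s r : s <= r -> C r `<=` C s.
  move=> sr; apply: hull_min; first exact: hullG.
  move=> y /= ry; apply: hullS => /=; lra.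
have Cg s x : C s x -> s <= g x.
  have Gd : Gdelta (~` [set y | g y < s]).
    apply: Fsigma_setC; have := hg s; congr Fsigma; apply/seteqP; split => y /=;
      by rewrite in_itv /=.
  move=> Cx; have := hull_min _ _ Gd _ x Cx.
  rewrite leNgt => H; apply/negP => gs; apply: H => //= y /= sy gy.
  have := hfg y; lra.
pose S x := [set s | C s x].
have hS x : has_sup (S x).
  split; first by exists (f x - 1); apply: hullS => /=; lra.
  by exists (g x) => s /Cg.
pose h x := sup (S x).
have hC s x : C s x -> s <= h x by move=> Cx; apply: sup_upper_bound.
have Cf s x : s < f x -> C s x by move=> sf; apply: hullS.
have hgt t : [set x | t < h x] = \bigcup_(s in [set s | t < s]) C s.
  apply/seteqP; split => x /=.
    move=> th; have [|r Sr hr] := sup_adherent (E := S x) (eps := h x - t) _ (hS x).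
      lra.
    exists r => //=; rewrite /h in hr th *; lra.
  move=> [s /= ts Cx]; have := hC _ _ Cx; lra.
have hlt t : [set x | h x < t] = \bigcup_(s in [set s | s < t]) ~` C s.
  apply/seteqP; split => x /=.
    move=> ht; exists ((h x + t) / 2); first by rewrite /=; lra.
    move=> /hC; lra.
  move=> [s /= st nCx]; suff : h x <= s by lra.
  apply: ge_sup; first by case: (hS x).
  move=> r /= Cr; rewrite leNgt; apply/negP => sr; apply: nCx.
  by apply: (Cmono s r) => //; apply: ltW.
have Fgt t : Fsigma [set x | t < h x].
  by rewrite hgt; apply: Fsigma_bigcup => // s _; apply: CF.
have Flt t : Fsigma [set x | h x < t].
  by rewrite hlt; apply: Fsigma_bigcup => // s _; apply: Gdelta_setC; apply: hullG.
exists h; split; last split.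
- move=> V oV.
  have -> : h @^-1` V = \bigcup_(p in [set p : R * R | forall y, p.1 < y < p.2 -> V y])
      ([set x | p.1 < h x] `&` [set x | h x < p.2]).
    apply/seteqP; split => x /=.
      move=> Vx; rewrite openE in oV; have := oV _ Vx.
      move=> /nbhs_ballP [e /= e0 eV].
      exists (h x - e, h x + e) => /=; last by split; lra.
      move=> y /andP[y1 y2]; apply: eV; rewrite -ball_normE /= ltr_distlC.
      by apply/andP; split.
    by move=> [[a b] /= Pab [ax bx]]; apply: Pab; apply/andP; split.
  apply: (Fsigma_bigcup HL) => p _; exact: (FsigmaI HL _ _ (Fgt p.1) (Flt p.2)).
- move=> x; rewrite leNgt; apply/negP => hfx.
  have m : (h x + f x) / 2 < f x by lra.
  have := hC _ _ (Cf _ _ m); lra.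
- move=> x; apply: ge_sup; first by case: (hS x).
  by move=> s /Cg.
Qed.
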